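(* The join $\mathsf V(M_2)\vee\mathbf N$ is the unique maximal (proper) subvariety of $\mathsf V(S_7)$: it is a proper subvariety, and every proper subvariety of $\mathsf V(S_7)$ is contained in it.
   Context: $S_7$ is the ai-semiring on $\{\infty,a,1\}$ with $x+x=x$, $x+y=\infty$ for $x\neq y$, and commutative multiplication with $\infty$ a zero, $a\cdot a=\infty$, $a\cdot 1=a$, $1\cdot1=1$; $\mathsf V(S_7)$ is the variety it generates. $M_2$ is the two-element ai-semiring $\{1,\infty\}$ with $1+\infty=\infty$, $x+x=x$, $1\cdot1=1$ and $\infty$ a multiplicative zero. $\mathbf N$ is the subvariety of $\mathsf V(S_7)$ defined by $x^2y\approx x^2$. $\mathcal V_1\vee\mathcal V_2$ denotes the smallest variety containing both. *)

(* Defs.v *)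
Record algebra : Type := Algebra {
  car :> Type;
  add : car -> car -> car;
  mul : car -> car -> car
}.

Inductive term : Type :=
| Var : nat -> term
| Add : term -> term -> term
| Mul : term -> term -> term.

Fixpoint eval (A : algebra) (v : nat -> car A) (t : term) : car A :=
  match t with
  | Var n => v n
  | Add s u => add A (eval A v s) (eval A v u)
  | Mul s u => mul A (eval A v s) (eval A v u)
  end.

Definition identity : Type := (term * term)%type.

Definition sat (A : algebra) (e : identity) : Prop :=
  forall v : nat -> car A, eval A v (fst e) = eval A v (snd e).

Definition aclass : Type := algebra -> Prop.

Definition is_variety (K : aclass) : Prop :=
  exists Sigma : identity -> Prop,
    forall A : algebra, K A <-> (forall e, Sigma e -> sat A e).

Definition gen (C : aclass) : aclass :=
  fun B => forall K : aclass, is_variety K -> (forall A, C A -> K A) -> K B.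

Definition Vgen (A : algebra) : aclass := gen (fun X => X = A).

Definition vjoin (V1 V2 : aclass) : aclass := gen (fun X => V1 X \/ V2 X).

Definition subclass (K1 K2 : aclass) : Prop := forall A, K1 A -> K2 A.

Definition proper_subvariety (K V : aclass) : Prop :=
  is_variety K /\ subclass K V /\ exists A, V A /\ ~ K A.

Inductive s7 : Type := S7inf | S7a | S7one.

Definition s7_eqb (x y : s7) : bool :=
  match x, y with
  | S7inf, S7inf | S7a, S7a | S7one, S7one => true
  | _, _ => false
  end.

Definition s7_add (x y : s7) : s7 := if s7_eqb x y then x else S7inf.

Definition s7_mul (x y : s7) : s7 :=
  match x, y with
  | S7inf, _ | _, S7inf => S7inf
  | S7a, S7a => S7inf
  | S7a, S7one | S7one, S7a => S7a
  | S7one, S7one => S7one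
  end.

Definition S7 : algebra := Algebra s7 s7_add s7_mul.

Inductive m2 : Type := M2one | M2inf.

Definition m2_add (x y : m2) : m2 :=
  match x, y with
  | M2one, M2one => M2one
  | _, _ => M2inf
  end.

Definition m2_mul (x y : m2) : m2 :=
  match x, y with
  | M2one, M2one => M2one
  | _, _ => M2inf
  end.

Definition M2 : algebra := Algebra m2 m2_add m2_mul.

Definition x_ : term := Var 0.
Definition y_ : term := Var 1.

Definition N_identity : identity := (Mul (Mul x_ x_) y_, Mul x_ x_).

Definition Nvar : aclass := fun B => Vgen S7 B /\ sat B N_identity.

(* Main.v *)
Require Import Defs.
From Stdlib Require Import List Bool Arith Lia Classical ClassicalEpsilon Eqdep_dec.
Import ListNotations.
Require Import Defs.

Lemma gen_iff (C : aclass) (B : algebra) :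
  gen C B <-> (forall e, (forall A, C A -> sat A e) -> sat B e).
Proof.
  split.
  - intros H e He.
    assert (HK : (fun X => forall e, (forall A, C A -> sat A e) -> sat X e) B).
    { apply H.
      + exists (fun e => forall A, C A -> sat A e). intro A; reflexivity.
      + intros A CA e' He'. apply He', CA. }
    apply HK, He.
  - intros H K [Sig HSig] HC. apply HSig. intros e He. apply H.
    intros A CA. apply (proj1 (HSig A) (HC A CA)), He.
Qed.

Lemma gen_is_variety C : is_variety (gen C).
Proof. exists (fun e => forall A, C A -> sat A e). intro; apply gen_iff. Qed.

Lemma vgen_iff A B : Vgen A B <-> forall e, sat A e -> sat B e.
Proof.
  unfold Vgen; rewrite gen_iff. split; intros H e He; apply H.
  - intros X ->; exact He.
  - apply He; reflexivity.
Qed.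

Fixpoint subst (f : nat -> term) t := match t with
 | Var n => f n | Add s u => Add (subst f s) (subst f u) | Mul s u => Mul (subst f s) (subst f u) end.
Lemma eval_subst A w f t : eval A w (subst f t) = eval A (fun n => eval A w (f n)) t.
Proof. induction t; simpl; congruence. Qed.

Fixpoint occb n t : bool := match t with
 | Var m => Nat.eqb m n | Add s u | Mul s u => occb n s || occb n u end.

Lemma eval_ext A v w t : (forall n, occb n t = true -> v n = w n) -> eval A v t = eval A w t.
Proof.
  induction t; simpl; intros H.
  - apply H. apply Nat.eqb_refl.
  - rewrite IHt1, IHt2; auto; intros; apply H; rewrite H0; auto using orb_true_r.
  - rewrite IHt1, IHt2; auto; intros; apply H; rewrite H0; auto using orb_true_r.
Qed.

Lemma s7_inf r t n : occb n t = true -> r n = S7inf -> eval S7 r t = S7inf.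
Proof.
  induction t; simpl; intros H1 H2.
  - apply Nat.eqb_eq in H1; subst; auto.
  - apply orb_true_iff in H1; destruct H1 as [H1|H1];
    [rewrite IHt1 by auto | rewrite IHt2 by auto];
    destruct (eval S7 r t1), (eval S7 r t2); reflexivity.
  - apply orb_true_iff in H1; destruct H1 as [H1|H1];
    [rewrite IHt1 by auto | rewrite IHt2 by auto];
    destruct (eval S7 r t1), (eval S7 r t2); reflexivity.
Qed.

Lemma s7_one r t : eval S7 r t = S7one <-> forall n, occb n t = true -> r n = S7one.
Proof.
  induction t; simpl.
  - split.
    + intros H m Hm; apply Nat.eqb_eq in Hm; subst; auto.
    + intros H; apply H; apply Nat.eqb_refl.
  - assert (K : forall x y, s7_add x y = S7one <-> x = S7one /\ y = S7one)
      by (destruct x, y; simpl; try (split; [intro HH; discriminate HH|intros [H1 H2]; discriminate]); split; auto).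
    rewrite K, IHt1, IHt2. split.
    + intros [H1 H2] m Hm; apply orb_true_iff in Hm; destruct Hm; auto.
    + intros H; split; intros m Hm; apply H; rewrite Hm; auto using orb_true_r.
  - assert (K : forall x y, s7_mul x y = S7one <-> x = S7one /\ y = S7one)
      by (destruct x, y; simpl; try (split; [intro HH; discriminate HH|intros [H1 H2]; discriminate]); split; auto).
    rewrite K, IHt1, IHt2. split.
    + intros [H1 H2] m Hm; apply orb_true_iff in Hm; destruct Hm; auto.
    + intros H; split; intros m Hm; apply H; rewrite Hm; auto using orb_true_r.
Qed.

Lemma s7_a_not_one r t n : occb n t = true -> r n = S7a -> eval S7 r t <> S7one.
Proof. intros H1 H2 H3. apply s7_one with (n := n) in H3; auto. congruence. Qed.

Lemma m2_inf n t : eval M2 (fun m => if Nat.eqb m n then M2inf else M2one) t = M2inf <-> occb n t = true.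
Proof.
  induction t; simpl.
  - destruct (Nat.eqb n0 n); split; congruence.
  - rewrite orb_true_iff, <- IHt1, <- IHt2.
    destruct (eval M2 _ t1), (eval M2 _ t2); simpl; intuition congruence.
  - rewrite orb_true_iff, <- IHt1, <- IHt2.
    destruct (eval M2 _ t1), (eval M2 _ t2); simpl; intuition congruence.
Qed.

Lemma m2_content u v : sat M2 (u, v) -> forall n, occb n u = occb n v.
Proof.
  intros H n. specialize (H (fun m => if Nat.eqb m n then M2inf else M2one)).
  cbn [fst snd] in H.
  destruct (occb n u) eqn:E1, (occb n v) eqn:E2; auto.
  - apply m2_inf in E1. rewrite H in E1. apply m2_inf in E1. congruence.
  - apply m2_inf in E2. rewrite <- H in E2. apply m2_inf in E2. congruence.
Qed.

Lemma S7_eq_crit u v : (forall n, occb n u = occb n v) ->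
  (forall r, eval S7 r u = S7a <-> eval S7 r v = S7a) -> sat S7 (u, v).
Proof.
  intros Hc Ha r. cbn [fst snd].
  destruct (eval S7 r u) eqn:Eu.
  - destruct (eval S7 r v) eqn:Ev; auto.
    + apply Ha in Ev; congruence.
    + assert (eval S7 r u = S7one); [|congruence].
      apply s7_one; intros n Hn; apply s7_one with (t := v); auto; rewrite <- Hc; auto.
  - symmetry; apply Ha; auto.
  - symmetry. apply s7_one. intros n Hn. apply s7_one with (t := u); auto. rewrite Hc; auto.
Qed.

Definition alive t := forall n, occb n t = true -> exists r, eval S7 r t = S7a /\ r n = S7a.
Definition xsq : identity := (Mul (Mul x_ x_) y_, Mul (Mul x_ x_) (Mul y_ y_)).

Lemma dead_sq B u : (forall e, sat S7 e -> sat B e) -> sat B xsq -> ~ alive u ->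
  forall w, eval B w u = eval B w (Mul u u).
Proof.
  intros HB Hx Hd w.
  apply not_all_ex_not in Hd. destruct Hd as [x Hx'].
  apply imply_to_and in Hx'. destruct Hx' as [Hocc Hno].
  assert (S1 : sat S7 (u, Add u (Mul (Mul (Var x) (Var x)) u))).
  { intro r; simpl. destruct (r x) eqn:Ex.
    - rewrite (s7_inf r u x Hocc Ex). reflexivity.
    - destruct (eval S7 r u) eqn:Eu; try reflexivity; exfalso.
      + apply Hno; exists r; auto.
      + eapply s7_a_not_one; eauto.
    - destruct (eval S7 r u); reflexivity. }
  assert (S2 : sat S7 (Add u (Mul (Mul (Var x) (Var x)) (Mul u u)), Mul u u)).
  { intro r; simpl. destruct (r x) eqn:Ex.
    - rewrite (s7_inf r u x Hocc Ex). reflexivity.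
    - destruct (eval S7 r u) eqn:Eu; try reflexivity; exfalso.
      eapply s7_a_not_one; eauto.
    - destruct (eval S7 r u); reflexivity. }
  pose proof (HB _ S1 w) as E1. simpl in E1.
  pose proof (HB _ S2 w) as E3. simpl in E3.
  pose proof (Hx (fun n => if Nat.eqb n 0 then w x else eval B w u)) as E2.
  unfold xsq, x_, y_ in E2. simpl in E2.
  etransitivity; [exact E1|]. rewrite E2. simpl. exact E3.
Qed.

Lemma dead_eq B u v : (forall e, sat S7 e -> sat B e) -> sat B xsq -> ~ alive u -> ~ alive v ->
  (forall n, occb n u = occb n v) -> sat B (u, v).
Proof.
  intros HB Hx Du Dv Hc w. cbn [fst snd].
  rewrite (dead_sq B u HB Hx Du w), (dead_sq B v HB Hx Dv w).
  apply (HB (Mul u u, Mul v v)). apply S7_eq_crit.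
  - intro n; simpl; rewrite Hc; reflexivity.
  - intro r; simpl. destruct (eval S7 r u), (eval S7 r v); simpl; split; intro H; discriminate H.
Qed.

Definition isinf (z : s7) : bool := match z with S7inf => true | _ => false end.
Definition isa (z : s7) : bool := match z with S7a => true | _ => false end.
Definition raw := option (s7 * list s7).
Fixpoint zipw (f : s7 -> s7 -> s7) (l l' : list s7) : list s7 :=
  match l, l' with x :: l, y :: l' => f x y :: zipw f l l' | _, _ => [] end.
Definition rop (f : s7 -> s7 -> s7) (r r' : raw) : raw :=
  match r, r' with
  | Some (v, w), Some (v', w') =>
      if existsb isinf (zipw f w w') then None else Some (f v v', zipw f w w')
  | _, _ => None end.
Definition cok (k : nat) (r : raw) : bool :=
  match r with None => true
  | Some (v, w) => Nat.eqb (length w) k && forallb (fun z => negb (isinf z)) w && existsb isa w end.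

Lemma length_zipw f l l' : length l = length l' -> length (zipw f l l') = length l.
Proof. revert l'; induction l; destruct l'; simpl; intros; auto; discriminate. Qed.

Lemma forallb_neg l : existsb isinf l = false -> forallb (fun z => negb (isinf z)) l = true.
Proof. induction l; simpl; auto. intro H; apply orb_false_iff in H; destruct H as [H1 H2]. rewrite H1, IHl; auto. Qed.

Lemma ex_zip_a f l l' : (forall y, isa (f S7a y) || isinf (f S7a y) = true) ->
  length l = length l' -> existsb isa l = true -> existsb isinf (zipw f l l') = false ->
  existsb isa (zipw f l l') = true.
Proof.
  intro Hf; revert l'; induction l as [|x l IH]; destruct l' as [|y l']; simpl; intros Hl H1 H2; try discriminate.
  apply orb_false_iff in H2; destruct H2 as [H2 H3].
  apply orb_true_iff in H1; destruct H1 as [H1|H1].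
  - destruct x; try discriminate. specialize (Hf y). rewrite H2, orb_false_r in Hf. rewrite Hf; auto.
  - rewrite IH; auto using orb_true_r.
Qed.

Lemma cok_rop f k r r' : (forall y, isa (f S7a y) || isinf (f S7a y) = true) ->
  cok k r = true -> cok k r' = true -> cok k (rop f r r') = true.
Proof.
  destruct r as [[v w]|], r' as [[v' w']|]; simpl; auto. intros Hf H1 H2.
  destruct (existsb isinf (zipw f w w')) eqn:E; [reflexivity|]. simpl.
  apply andb_true_iff in H1; destruct H1 as [H1 H1c]; apply andb_true_iff in H1; destruct H1 as [H1a H1b].
  apply andb_true_iff in H2; destruct H2 as [H2 H2c]; apply andb_true_iff in H2; destruct H2 as [H2a H2b].
  apply Nat.eqb_eq in H1a, H2a.
  rewrite length_zipw by congruence. rewrite H1a, Nat.eqb_refl, forallb_neg by auto. simpl.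
  apply ex_zip_a; auto; congruence.
Qed.

Definition ccar k := {r : raw | cok k r = true}.
Lemma cmk_pf k r : cok k (if cok k r then r else None) = true.
Proof. destruct (cok k r) eqn:E; [exact E | reflexivity]. Qed.
Definition cmk k (r : raw) : ccar k := exist _ (if cok k r then r else None) (cmk_pf k r).
Definition cadd k (x y : ccar k) : ccar k := cmk k (rop s7_add (proj1_sig x) (proj1_sig y)).
Definition cmul k (x y : ccar k) : ccar k := cmk k (rop s7_mul (proj1_sig x) (proj1_sig y)).
Definition Calg k : algebra := Algebra (ccar k) (cadd k) (cmul k).

Lemma Hf_add : forall y, isa (s7_add S7a y) || isinf (s7_add S7a y) = true.
Proof. destruct y; reflexivity. Qed.
Lemma Hf_mul : forall y, isa (s7_mul S7a y) || isinf (s7_mul S7a y) = true.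
Proof. destruct y; reflexivity. Qed.

Lemma proj_cadd k x y : proj1_sig (cadd k x y) = rop s7_add (proj1_sig x) (proj1_sig y).
Proof. unfold cadd, cmk; simpl. rewrite cok_rop; auto using Hf_add; apply proj2_sig. Qed.
Lemma proj_cmul k x y : proj1_sig (cmul k x y) = rop s7_mul (proj1_sig x) (proj1_sig y).
Proof. unfold cmul, cmk; simpl. rewrite cok_rop; auto using Hf_mul; apply proj2_sig. Qed.

Definition rep (j : nat) (r : raw) : s7 :=
  match r with None => S7inf | Some (v, w) => match j with 0 => v | S i => nth i w S7one end end.
Definition Hk k (g : nat -> s7) : raw :=
  if existsb isinf (map (fun i => g (S i)) (seq 0 k)) then None
  else Some (g 0, map (fun i => g (S i)) (seq 0 k)).

Lemma map_nth_self (w : list s7) : map (fun i => nth i w S7one) (seq 0 (length w)) = w.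
Proof.
  induction w as [|x w IH]; simpl; auto. f_equal.
  rewrite <- seq_shift, map_map. simpl. exact IH.
Qed.

Lemma H_rep k r : 0 < k -> cok k r = true -> Hk k (fun j => rep j r) = r.
Proof.
  destruct r as [[v w]|]; unfold Hk; simpl.
  - intros _ Hc.
    apply andb_true_iff in Hc; destruct Hc as [Hc _]; apply andb_true_iff in Hc; destruct Hc as [Hl Hn].
    apply Nat.eqb_eq in Hl. subst k. rewrite map_nth_self.
    assert (existsb isinf w = false).
    { clear -Hn; induction w; simpl in *; auto. apply andb_true_iff in Hn; destruct Hn.
      rewrite IHw; auto. destruct a; auto; discriminate. }
    rewrite H; reflexivity.
  - intros Hk _. destruct k; [lia|]. reflexivity.
Qed.

Lemma map_zipw f (a b : nat -> s7) l : map (fun i => f (a i) (b i)) l = zipw f (map a l) (map b l).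
Proof. induction l; simpl; congruence. Qed.

Lemma ex_zip_l f l l' : (forall y, f S7inf y = S7inf) -> length l = length l' ->
  existsb isinf l = true -> existsb isinf (zipw f l l') = true.
Proof.
  intro Hf; revert l'; induction l as [|x l IH]; destruct l' as [|y l']; simpl; intros Hl H; try discriminate.
  apply orb_true_iff in H; destruct H as [H|H].
  - destruct x; try discriminate. rewrite Hf; reflexivity.
  - rewrite IH; auto using orb_true_r.
Qed.
Lemma ex_zip_r f l l' : (forall x, f x S7inf = S7inf) -> length l = length l' ->
  existsb isinf l' = true -> existsb isinf (zipw f l l') = true.
Proof.
  intro Hf; revert l'; induction l as [|x l IH]; destruct l' as [|y l']; simpl; intros Hl H; try discriminate.
  apply orb_true_iff in H; destruct H as [H|H].
  - destruct y; try discriminate. rewrite Hf; reflexivity.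
  - rewrite IH; auto using orb_true_r.
Qed.

Lemma H_op k f g g' : (forall y, f S7inf y = S7inf) -> (forall x, f x S7inf = S7inf) ->
  Hk k (fun j => f (g j) (g' j)) = rop f (Hk k g) (Hk k g').
Proof.
  intros H1 H2. unfold Hk.
  rewrite (map_zipw f (fun i => g (S i)) (fun i => g' (S i))).
  assert (Hl : length (map (fun i => g (S i)) (seq 0 k)) = length (map (fun i => g' (S i)) (seq 0 k)))
    by (rewrite !length_map; reflexivity).
  destruct (existsb isinf (map (fun i => g (S i)) (seq 0 k))) eqn:E1.
  - rewrite ex_zip_l; auto.
  - destruct (existsb isinf (map (fun i => g' (S i)) (seq 0 k))) eqn:E2.
    + rewrite ex_zip_r; auto.
    + reflexivity.
Qed.

Lemma C_lift k (Hk0 : 0 < k) (tau : nat -> ccar k) t :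
  proj1_sig (eval (Calg k) tau t) = Hk k (fun j => eval S7 (fun n => rep j (proj1_sig (tau n))) t).
Proof.
  induction t; simpl.
  - symmetry; apply H_rep; [exact Hk0 | apply proj2_sig].
  - rewrite cok_rop by (auto using Hf_add; apply proj2_sig). rewrite IHt1, IHt2. rewrite <- H_op; [reflexivity| |]; intros z; destruct z; reflexivity.
  - rewrite cok_rop by (auto using Hf_mul; apply proj2_sig). rewrite IHt1, IHt2. rewrite <- H_op; [reflexivity| |]; intros z; destruct z; reflexivity.
Qed.

Lemma sig_eq k (x y : ccar k) : proj1_sig x = proj1_sig y -> x = y.
Proof. destruct x, y; simpl; intros ->; f_equal; apply UIP_dec, bool_dec. Qed.

Lemma H_ext k g g' : (forall j, g j = g' j) -> Hk k g = Hk k g'.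
Proof.
  intro H. unfold Hk. rewrite (map_ext (fun i => g (S i)) (fun i => g' (S i))) by auto.
  rewrite H; reflexivity.
Qed.

Lemma C_sat k : 0 < k -> forall e, sat S7 e -> sat (Calg k) e.
Proof.
  intros Hk0 [s t] He tau. apply sig_eq. rewrite !C_lift by auto.
  apply H_ext. intro j. apply He.
Qed.

Lemma sq_none (w : list s7) : existsb isa w = true -> existsb isinf (zipw s7_mul w w) = true.
Proof.
  induction w as [|x w IH]; simpl; intro H; [discriminate|].
  apply orb_true_iff in H; destruct H as [H|H].
  - destruct x; try discriminate; reflexivity.
  - rewrite IH; auto using orb_true_r.
Qed.

Lemma C_N k : sat (Calg k) N_identity.
Proof.
  intro v. unfold N_identity, x_, y_. cbn [fst snd eval]. apply sig_eq. change (mul (Calg k)) with (cmul k).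
  assert (Hs : rop s7_mul (proj1_sig (v 0)) (proj1_sig (v 0)) = None).
  { destruct (v 0) as [[[a0 w]|] Hc]; simpl; [|reflexivity].
    simpl in Hc. apply andb_true_iff in Hc; destruct Hc as [_ Hc].
    rewrite sq_none; auto. }
  rewrite !proj_cmul, Hs. reflexivity.
Qed.

Fixpoint mv t := match t with Var n => S n | Add s u | Mul s u => max (mv s) (mv u) end.
Lemma occ_mv n t : occb n t = true -> n < mv t.
Proof.
  induction t; simpl; intro H.
  - apply Nat.eqb_eq in H; lia.
  - apply orb_true_iff in H; destruct H; [specialize (IHt1 H)|specialize (IHt2 H)]; lia.
  - apply orb_true_iff in H; destruct H; [specialize (IHt1 H)|specialize (IHt2 H)]; lia.
Qed.

Lemma nth_map_seq (f : nat -> s7) s k i d : i < k -> nth i (map f (seq s k)) d = f (s + i).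
Proof.
  revert s i; induction k; intros s i H; [lia|]. simpl. destruct i.
  - f_equal; lia.
  - rewrite IHk by lia. f_equal; lia.
Qed.

Lemma Vgen_C k : 0 < k -> Vgen S7 (Calg k).
Proof. intro; apply vgen_iff; apply C_sat; auto. Qed.

Lemma sep (p q : term) (r0 : nat -> s7) : alive p -> (forall n, occb n p = occb n q) ->
  eval S7 r0 p = S7a -> eval S7 r0 q <> S7a -> exists C, Nvar C /\ ~ sat C (p, q).
Proof.
  intros Hal Hc Hp Hq.
  assert (HF : forall i, exists r, eval S7 r p = S7a /\ (occb i p = true -> r i = S7a)).
  { intro i. destruct (occb i p) eqn:E.
    - destruct (Hal i E) as [r [H1 H2]]; exists r; auto.
    - exists r0; split; auto; discriminate. }
  set (F := fun i => proj1_sig (constructive_indefinite_description _ (HF i))).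
  assert (HFp : forall i, eval S7 (F i) p = S7a /\ (occb i p = true -> F i i = S7a))
    by (intro i; exact (proj2_sig (constructive_indefinite_description _ (HF i)))).
  clearbody F.
  set (k := S (mv p)). assert (Hkv : k = S (mv p)) by reflexivity. clearbody k.
  set (r := fun n => if occb n p then Some (r0 n, map (fun i => F i n) (seq 0 k)) else None : raw).
  assert (Hr : forall n, cok k (r n) = true).
  { intro n; unfold r; destruct (occb n p) eqn:E; [|reflexivity]. simpl.
    rewrite length_map, length_seq, Nat.eqb_refl. simpl.
    apply andb_true_iff; split.
    - apply forallb_forall. intros z Hz. apply in_map_iff in Hz. destruct Hz as [i [<- _]].
      destruct (F i n) eqn:EF; auto.
      destruct (HFp i) as [HH _]. rewrite (s7_inf (F i) p n E EF) in HH; discriminate.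
    - apply existsb_exists. exists (F n n). split.
      + apply (in_map (fun i => F i n)). apply in_seq. pose proof (occ_mv n p E). lia.
      + rewrite (proj2 (HFp n) E); reflexivity. }
  set (tau := fun n => cmk k (r n)).
  assert (Htau : forall n, proj1_sig (tau n) = r n)
    by (intro n; unfold tau, cmk; simpl; rewrite Hr; reflexivity).
  exists (Calg k). split; [split; [apply Vgen_C; lia | apply C_N]|].
  intro Hs. specialize (Hs tau). cbn [fst snd] in Hs.
  apply (f_equal (@proj1_sig _ _)) in Hs. rewrite !C_lift in Hs by (lia).
  assert (E0 : forall t, (forall n, occb n t = true -> occb n p = true) ->
     eval S7 (fun n => rep 0 (proj1_sig (tau n))) t = eval S7 r0 t).
  { intros t Ht. apply eval_ext. intros n Hn. rewrite Htau. unfold r. rewrite (Ht n Hn). reflexivity. }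
  assert (ES : forall t i, i < k -> (forall n, occb n t = true -> occb n p = true) ->
     eval S7 (fun n => rep (S i) (proj1_sig (tau n))) t = eval S7 (F i) t).
  { intros t i Hi Ht. apply eval_ext. intros n Hn. rewrite Htau. unfold r. rewrite (Ht n Hn). simpl.
    rewrite nth_map_seq by auto. reflexivity. }
  unfold Hk in Hs.
  rewrite (map_ext_in _ (fun _ => S7a) (seq 0 k)) in Hs.
  2:{ intros i Hi. apply in_seq in Hi. rewrite ES by (auto; lia). apply HFp. }
  assert (Hx : existsb isinf (map (fun _ : nat => S7a) (seq 0 k)) = false).
  { generalize (seq 0 k); intro l; induction l; simpl; auto. }
  rewrite Hx in Hs.
  rewrite (E0 p (fun n H => H)) in Hs.
  rewrite (E0 q) in Hs by (intros n Hn; rewrite Hc; exact Hn).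
  destruct (existsb isinf _) in Hs; [discriminate|]. injection Hs; intros _ Hqq. congruence.
Qed.

Lemma sat_sym A u v : sat A (u, v) -> sat A (v, u).
Proof. intros H w; symmetry; apply H. Qed.

Lemma sep_aux u v r : ~ (~ alive u /\ ~ alive v) -> (forall n, occb n u = occb n v) ->
  eval S7 r u = S7a -> eval S7 r v <> S7a -> exists C, Nvar C /\ ~ sat C (u, v).
Proof.
  intros Hnd Hc Hu Hv. destruct (classic (alive u)) as [Au|Du].
  - exact (sep u v r Au Hc Hu Hv).
  - assert (Av : alive v) by (apply NNPP; intro; apply Hnd; auto).
    destruct (classic (exists r1, eval S7 r1 v = S7a /\ eval S7 r1 u <> S7a)) as [[r1 [H1 H2]]|Hno].
    + destruct (sep v u r1 Av (fun n => eq_sym (Hc n)) H1 H2) as [C [HC Hs]].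
      exists C; split; auto. intro; apply Hs; apply sat_sym; auto.
    + exfalso. apply Du. intros n Hn. rewrite Hc in Hn. destruct (Av n Hn) as [r2 [H1 H2]].
      exists r2; split; auto. apply NNPP; intro; apply Hno; exists r2; auto.
Qed.

Lemma K2 B g : Vgen S7 B -> sat B xsq -> sat M2 g -> (forall C, Nvar C -> sat C g) -> sat B g.
Proof.
  destruct g as [u v]. intros HB Hx HM HN. rewrite vgen_iff in HB.
  pose proof (m2_content _ _ HM) as Hc.
  destruct (classic (~ alive u /\ ~ alive v)) as [[Du Dv]|Hnd].
  - apply dead_eq; auto.
  - apply HB. apply S7_eq_crit; auto. intro r.
    destruct (classic (eval S7 r u = S7a)) as [H1|H1], (classic (eval S7 r v = S7a)) as [H2|H2];
      try tauto.
    + exfalso. destruct (sep_aux u v r Hnd Hc H1 H2) as [C [HC Hs]]. apply Hs, HN, HC.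
    + exfalso.
      assert (Hnd' : ~ (~ alive v /\ ~ alive u)) by (intros [A1 A2]; apply Hnd; auto).
      destruct (sep_aux v u r Hnd' (fun n => eq_sym (Hc n)) H2 H1) as [C [HC Hs]].
      apply Hs, sat_sym, HN, HC.
Qed.

Definition phi (z : s7) : term := match z with
  | S7inf => Mul (Mul x_ x_) (Mul y_ y_) | S7a => Mul (Mul x_ x_) y_ | S7one => Mul x_ x_ end.
Lemma phi_add a b : sat S7 (Add (phi a) (phi b), phi (s7_add a b)).
Proof. destruct a, b; intro v; unfold x_, y_; simpl; destruct (v 0), (v 1); reflexivity. Qed.
Lemma phi_mul a b : sat S7 (Mul (phi a) (phi b), phi (s7_mul a b)).
Proof. destruct a, b; intro v; unfold x_, y_; simpl; destruct (v 0), (v 1); reflexivity. Qed.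

Lemma phi_hom B (HB : forall e, sat S7 e -> sat B e) r t w :
  eval B w (subst (fun n => phi (r n)) t) = eval B w (phi (eval S7 r t)).
Proof.
  induction t.
  - reflexivity.
  - change (add B (eval B w (subst (fun n => phi (r n)) t1)) (eval B w (subst (fun n => phi (r n)) t2))
       = eval B w (phi (s7_add (eval S7 r t1) (eval S7 r t2)))).
    rewrite IHt1, IHt2. exact (HB _ (phi_add _ _) w).
  - change (mul B (eval B w (subst (fun n => phi (r n)) t1)) (eval B w (subst (fun n => phi (r n)) t2))
       = eval B w (phi (s7_mul (eval S7 r t1) (eval S7 r t2)))).
    rewrite IHt1, IHt2. exact (HB _ (phi_mul _ _) w).
Qed.

Definition I1 : identity := (Mul (Mul (Mul x_ x_) (Mul y_ y_)) y_, Mul (Mul x_ x_) (Mul y_ y_)).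
Definition I2 : identity := (Mul (Mul x_ x_) (Mul y_ y_), Mul (Mul (Mul x_ x_) y_) y_).
Lemma I1ok : sat S7 I1. Proof. intro v; unfold I1, x_, y_; simpl; destruct (v 0), (v 1); reflexivity. Qed.
Lemma I2ok : sat S7 I2. Proof. intro v; unfold I2, x_, y_; simpl; destruct (v 0), (v 1); reflexivity. Qed.

Lemma K1 B e : Vgen S7 B -> sat B e -> ~ sat S7 e -> sat B xsq.
Proof.
  destruct e as [u v]. intros HB He Hn. rewrite vgen_iff in HB.
  apply not_all_ex_not in Hn. destruct Hn as [r Hr]. cbn [fst snd] in Hr.
  assert (Hphi : forall w, eval B w (phi (eval S7 r u)) = eval B w (phi (eval S7 r v))).
  { intro w. rewrite <- !phi_hom by auto. rewrite !eval_subst. apply He. }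
  pose proof (fun w => HB _ I1ok w) as E1. pose proof (fun w => HB _ I2ok w) as E2.
  unfold I1, I2, xsq, x_, y_ in *. simpl in E1, E2.
  destruct (eval S7 r u), (eval S7 r v); try (exfalso; apply Hr; reflexivity);
    intro w; specialize (Hphi w); specialize (E1 w); specialize (E2 w); simpl in *.
  - symmetry; exact Hphi.
  - rewrite <- E1, Hphi. reflexivity.
  - exact Hphi.
  - rewrite E2, Hphi. symmetry; exact Hphi.
  - rewrite <- E1, <- Hphi. reflexivity.
  - symmetry in Hphi. rewrite E2, Hphi. symmetry; exact Hphi.
Qed.

Definition emb (z : m2) : s7 := match z with M2one => S7one | M2inf => S7inf end.
Lemma emb_eval v t : eval S7 (fun n => emb (v n)) t = emb (eval M2 v t).
Proof.
  induction t; simpl; auto.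
  - rewrite IHt1, IHt2. destruct (eval M2 v t1), (eval M2 v t2); reflexivity.
  - rewrite IHt1, IHt2. destruct (eval M2 v t1), (eval M2 v t2); reflexivity.
Qed.
Lemma M2_sat e : sat S7 e -> sat M2 e.
Proof.
  intros H v. specialize (H (fun n => emb (v n))). rewrite !emb_eval in H.
  destruct (eval M2 v (fst e)), (eval M2 v (snd e)); simpl in H; congruence.
Qed.

Lemma N_xsq A : sat A N_identity -> sat A xsq.
Proof.
  intros H v. pose proof (H v) as E1.
  pose proof (H (fun n => if Nat.eqb n 1 then mul A (v 1) (v 1) else v n)) as E2.
  unfold N_identity, xsq, x_, y_ in *. simpl in *. rewrite E1, E2. reflexivity.
Qed.

Lemma M2_xsq : sat M2 xsq.
Proof. intro v; unfold xsq, x_, y_; simpl; destruct (v 0), (v 1); reflexivity. Qed.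

Theorem proposition3p14 :
  proper_subvariety (vjoin (Vgen M2) Nvar) (Vgen S7) /\
  (forall K : aclass, proper_subvariety K (Vgen S7) ->
     subclass K (vjoin (Vgen M2) Nvar)).
Proof.
  split.
  - split; [apply gen_is_variety|split].
    + intros B HB. apply vgen_iff. intros e He. apply (proj1 (gen_iff _ _) HB).
      intros A [HA|HA].
      * rewrite vgen_iff in HA. apply HA, M2_sat, He.
      * destruct HA as [HA _]. rewrite vgen_iff in HA. apply HA, He.
    + exists S7. split; [apply vgen_iff; auto|].
      intro HS. assert (Hx : sat S7 xsq).
      { apply (proj1 (gen_iff _ _) HS). intros A [HA|HA].
        - rewrite vgen_iff in HA. apply HA, M2_xsq.
        - apply N_xsq, HA. }
      specialize (Hx (fun n => if Nat.eqb n 0 then S7one else S7a)).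
      unfold xsq, x_, y_ in Hx. simpl in Hx. discriminate.
  - intros K [[Sig HSig] [Hsub [A0 [HA0 HnA0]]]] B HB.
    assert (HnS : ~ K S7).
    { intro HS7. apply HnA0. apply HA0; [exists Sig; exact HSig | intros A ->; exact HS7]. }
    rewrite HSig in HnS. apply not_all_ex_not in HnS. destruct HnS as [e He].
    apply imply_to_and in He. destruct He as [HSe HnSe].
    pose proof (Hsub B HB) as HBv.
    pose proof (proj1 (HSig B) HB e HSe) as HBe.
    pose proof (K1 B e HBv HBe HnSe) as Hx.
    apply (proj2 (gen_iff _ _)). intros g Hg. apply (K2 B g HBv Hx).
    + apply Hg. left. apply vgen_iff; auto.
    + intros C HC. apply Hg. right. exact HC.
Qed.
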